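(* Let $\mathbb{K}$ be a field of characteristic zero and $(n_1,\dots,n_t)$ a tuple of integers. If $(n_1,\dots,n_t)$ forms an $\mathfrak{sl}_2$-chained Lie algebra, then for every $1\le k\le t$ the truncated tuple $(n_1,\dots,n_k)$ also forms an $\mathfrak{sl}_2$-chained Lie algebra.
   Context: For $d\ge0$, $V_d\subset\mathbb{K}[x,y]$ is the space of homogeneous polynomials of degree $d$, an $\mathfrak{sl}_2(\mathbb{K})$-module with $\mathfrak{sl}_2(\mathbb{K})$ identified with the span of $x\frac{\partial}{\partial y}$, $y\frac{\partial}{\partial x}$, $x\frac{\partial}{\partial x}-y\frac{\partial}{\partial y}$. For $f\in V_n$, $g\in V_m$, $0\le k\le\min(n,m)$, the transvection is $(f,g)_k=\frac{(m-k)!}{m!}\frac{(n-k)!}{n!}\sum_{i=0}^{k}(-1)^i\binom{k}{i}\frac{\partial^kf}{\partial x^{k-i}\partial y^{i}}\frac{\partial^kg}{\partial x^{i}\partial y^{k-i}}\in V_{n+m-2k}$. Given $(n_1,\dots,n_t)$ put $m_i=V_{d_i}$ with $d_i=in_1-2(n_2+\cdots+n_i)$ and $c_{ijk}=\frac{d_i+d_j-d_k}{2}$. The tuple forms an $\mathfrak{sl}_2$-chained Lie algebra if all $d_i\ge0$ and there are scalars $\alpha_{ijk}\in\mathbb{K}$ ($1\le i\le j$, $i+j\le k\le t$), with $\alpha_{1,j,j+1}\ne0$ for $j=1,\dots,t-1$ and $\alpha_{ijk}=0$ whenever $(\cdot,\cdot)_{c_{ijk}}$ is undefined or (for $i=j$)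 not skew-symmetric, such that the bracket on $\mathfrak{g}=\mathfrak{sl}_2(\mathbb{K})\oplus m_1\oplus\cdots\oplus m_t$ given by the commutator on $\mathfrak{sl}_2(\mathbb{K})$, $[s,u]=-[u,s]=s(u)$ for $s\in\mathfrak{sl}_2(\mathbb{K})$, and $[u,v]=-[v,u]=\sum_{k=i+j}^t\alpha_{ijk}(u,v)_{c_{ijk}}$ for $u\in m_i$, $v\in m_j$, $i\le j$, makes $\mathfrak{g}$ a Lie algebra whose lattice of ideals is the chain $0<m_t<m_{t-1}\oplus m_t<\cdots<m_1\oplus\cdots\oplus m_t<\mathfrak{g}$. *)

(* Defs.v *)
From HB Require Import structures.
From mathcomp Require Import all_boot all_order all_algebra.
From mathcomp Require Import mpoly.

Set Implicit Arguments.
Unset Strict Implicit.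
Unset Printing Implicit Defensive.

Import Order.TTheory GRing.Theory Num.Theory.
Local Open Scope ring_scope.

Section Sl2Chained.
Context (K : fieldType).

Local Notation P := {mpoly K[2]}.

Definition xv : P := 'X_(0 : 'I_2).
Definition yv : P := 'X_(1 : 'I_2).
Definition dx (p : P) : P := mderiv (0 : 'I_2) p.
Definition dy (p : P) : P := mderiv (1 : 'I_2) p.

(* V_d : homogeneous polynomials of degree d (0 included). *)
Definition inV (d : nat) (p : P) : bool := p \is d.-homog.

Definition pder (a b : nat) (p : P) : P := iter a dx (iter b dy p).

Definition transv (n m k : nat) (f g : P) : P :=
  (((m - k)`!%:R / (m`!)%:R) * (((n - k)`!)%:R / (n`!)%:R)) *:
  \sum_(i < k.+1) (((-1) ^+ i * ('C(k, i))%:R) *: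
                   (pder (k - i) i f * pder i (k - i) g)).

(* d_i = i n_1 - 2 (n_2 + ... + n_i), tuple stored 0-indexed in a seq *)
Definition dd (n : seq int) (i : nat) : int :=
  (i%:Z * n`_0 - 2%:Z * \sum_(1 <= l < i) n`_l)%R.

(* c_{ijk} = (d_i + d_j - d_k)/2, when (.,.)_{c_{ijk}} is defined on
   V_{d_i} x V_{d_j}, i.e. c_{ijk} is an integer with 0 <= c <= min(d_i,d_j) *)
Definition cdef (n : seq int) (i j k : nat) : option nat :=
  let s := (dd n i + dd n j - dd n k)%R in
  if [&& (2 %| s)%Z, (0 <= s)%R & (s <= 2%:Z * Num.min (dd n i) (dd n j))%R]
  then Some (absz s %/ 2)%N else None.

(* (u,v)_{c_{ijk}} for u in m_i, v in m_j (0 when undefined; then alpha = 0) *)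
Definition trm (n : seq int) (i j k : nat) (u v : P) : P :=
  match cdef n i j k with
  | Some c => transv (absz (dd n i)) (absz (dd n j)) c u v
  | None => 0
  end.

(* sl2 element (a,b,c) := a x d/dy + b y d/dx + c (x d/dx - y d/dy) *)
Definition sl2 := (K * K * K)%type.

Definition act (s : sl2) (p : P) : P :=
  let: (a, b, c) := s in
  a *: (xv * dy p) + b *: (yv * dx p) + c *: (xv * dx p - yv * dy p).

(* commutator: with E = x d/dy, F = y d/dx, H = x d/dx - y d/dy,
   [E,F] = H, [H,E] = 2E, [H,F] = -2F *)
Definition sl2br (s s' : sl2) : sl2 :=
  let: (a, b, c) := s in let: (a', b', c') := s' in
  (2%:R * (c * a' - a * c'), 2%:R * (b * c' - c * b'), a * b' - b * a').

(* elements of g = sl2 + m_1 + ... + m_t: component i of the function is the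
   m_i-part (required zero outside 1..t) *)
Definition gel := (sl2 * (nat -> P))%type.

Definition inG (n : seq int) (e : gel) : Prop :=
  forall i, ((1 <= i <= size n)%N -> inV (absz (dd n i)) (e.2 i)) /\
            (~~ (1 <= i <= size n)%N -> e.2 i = 0).

Definition gzero : gel := ((0, 0, 0), fun _ => 0).
Definition gadd (e e' : gel) : gel :=
  let: ((a, b, c), u) := e in let: ((a', b', c'), u') := e' in
  ((a + a', b + b', c + c'), fun i => u i + u' i).
Definition gscale (r : K) (e : gel) : gel :=
  let: ((a, b, c), u) := e in ((r * a, r * b, r * c), fun i => r *: u i).

(* the bracket determined by the scalars alpha, extended bilinearly:
   [s,u] = s(u) = -[u,s], and for u in m_i, v in m_j:
   [u,v] = sum_k alpha_{ijk} (u,v)_{c_{ijk}} if i <= j, and -[v,u] if i > j *)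
Definition gbr (n : seq int) (alpha : nat -> nat -> nat -> K) (e e' : gel)
  : gel :=
  (sl2br e.1 e'.1,
   fun k => if (1 <= k <= size n)%N then
     act e.1 (e'.2 k) - act e'.1 (e.2 k) +
     \sum_(1 <= i < (size n).+1) \sum_(1 <= j < (size n).+1 | (i + j <= k)%N)
        (if (i <= j)%N then alpha i j k *: trm n i j k (e.2 i) (e'.2 j)
         else - (alpha j i k *: trm n j i k (e'.2 j) (e.2 i)))
   else 0).

Definition alpha_ok (n : seq int) (alpha : nat -> nat -> nat -> K) : Prop :=
  forall i j k, (1 <= i <= j)%N -> (i + j <= k <= size n)%N ->
    alpha i j k != 0 ->
    exists c, cdef n i j k = Some c /\
      (i = j -> forall f g, inV (absz (dd n i)) f -> inV (absz (dd n i)) g ->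
         transv (absz (dd n i)) (absz (dd n i)) c f g =
         - transv (absz (dd n i)) (absz (dd n i)) c g f).

(* g is a Lie algebra (the bracket is bilinear by construction) *)
Definition is_lie (n : seq int) alpha : Prop :=
  (forall e, inG n e -> gbr n alpha e e = gzero) /\
  (forall x y z, inG n x -> inG n y -> inG n z ->
     gadd (gadd (gbr n alpha x (gbr n alpha y z))
                (gbr n alpha y (gbr n alpha z x)))
          (gbr n alpha z (gbr n alpha x y)) = gzero).

Definition is_ideal (n : seq int) alpha (I : gel -> Prop) : Prop :=
  [/\ (forall e, I e -> inG n e), I gzero,
      (forall e e', I e -> I e' -> I (gadd e e')),
      (forall r e, I e -> I (gscale r e)) &
      (forall x e, inG n x -> I e -> I (gbr n alpha x e))].

(* m_k + m_{k+1} + ... + m_t  (k = t+1 gives 0) *)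
Definition tail_part (n : seq int) (k : nat) (e : gel) : Prop :=
  [/\ inG n e, e.1 = (0, 0, 0) & forall i, (i < k)%N -> e.2 i = 0].

Definition ideals_chain (n : seq int) alpha : Prop :=
  forall I : gel -> Prop, is_ideal n alpha I <->
    ((forall e, I e <-> inG n e) \/
     exists k, (1 <= k <= (size n).+1)%N /\ forall e, I e <-> tail_part n k e).

Definition sl2_chained (n : seq int) : Prop :=
  (forall i, (1 <= i <= size n)%N -> (0 <= dd n i)%R) /\
  exists alpha : nat -> nat -> nat -> K,
    [/\ alpha_ok n alpha,
        (forall j, (1 <= j < size n)%N -> alpha 1%N j j.+1 != 0),
        is_lie n alpha &
        ideals_chain n alpha].

End Sl2Chained.

(* Main.v *)
Require Import Defs.
From HB Require Import structures.
From mathcomp Require Import all_boot all_order all_algebra.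
From mathcomp Require Import mpoly.
From mathcomp Require Import zify.
From Stdlib Require Import FunctionalExtensionality.
Set Implicit Arguments.
Import GRing.Theory.
Local Open Scope ring_scope.

Section Trunc.
Variables (K : fieldType) (n : seq int) (k : nat).
Hypothesis k1 : (1 <= k)%N.
Hypothesis kn : (k <= size n)%N.
Local Notation tk := (take k n).
Local Notation P := {mpoly K[2]}.

Definition trunc (e : gel K) : gel K :=
  (e.1, fun i => if (i <= k)%N then e.2 i else 0).

Lemma size_tk : size tk = k.
Proof. by rewrite size_takel. Qed.

Lemma dd_take i : (i <= k)%N -> dd tk i = dd n i.
Proof.
move=> Hi; rewrite /dd nth_take //; congr (_ - _ * _).
apply: eq_big_nat => l /andP[_ Hl]; rewrite nth_take //; lia.
Qed.

Lemma trm_take i j l : (i <= k)%N -> (j <= k)%N -> (l <= k)%N ->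
  trm tk i j l = trm n i j l :> (P -> P -> P).
Proof.
move=> Hi Hj Hl; by rewrite /trm /cdef !dd_take.
Qed.

Lemma sum_red (F : nat -> nat -> P) M m : (m <= M)%N ->
  \sum_(1 <= i < M.+1) \sum_(1 <= j < M.+1 | (i + j <= m)%N) F i j =
  \sum_(1 <= i < m.+1) \sum_(1 <= j < m.+1 | (i + j <= m)%N) F i j.
Proof.
move=> Hm.
have split1 (G : nat -> P) (Q : pred nat) :
    \sum_(1 <= i < M.+1 | Q i) G i =
    \sum_(1 <= i < m.+1 | Q i) G i + \sum_(m.+1 <= i < M.+1 | Q i) G i.
  by rewrite (big_cat_nat _ (n:=m.+1)).
rewrite split1.
rewrite [X in _ + X]big_nat_cond [X in _ + X]big1 ?addr0; last first.
  move=> i /andP[/andP[Hi _] _]; rewrite big1 // => j Hj; lia.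
apply: eq_bigr => i _.
rewrite split1 [X in _ + X]big_nat_cond [X in _ + X]big1 ?addr0 //.
move=> j /andP[/andP[Hj _] Hij]; lia.
Qed.

Lemma gbrT alpha a b :
  gbr tk alpha (trunc a) (trunc b) = trunc (gbr n alpha a b).
Proof.
rewrite /gbr /trunc /=; congr pair; apply: functional_extensionality => l.
rewrite size_tk.
case: (boolP (l <= k)%N) => Hl; last by case: (1 <= l)%N; rewrite /= ?(negbTE Hl).
case: (boolP (1 <= l)%N) => H1 /=; last by [].
rewrite (leq_trans Hl kn) /=.
congr (_ + _).
rewrite (sum_red _ _ _ Hl) (sum_red _ _ _ (leq_trans Hl kn)).
apply: eq_bigr => i _; rewrite big_nat_cond [in RHS]big_nat_cond.
apply: eq_bigr => j /andP[/andP[Hj1 Hj2] Hij].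
have Hi : (i <= k)%N by lia.
have Hj : (j <= k)%N by lia.
by rewrite Hi Hj !trm_take.
Qed.

Lemma trunc_add a b : trunc (gadd a b) = gadd (trunc a) (trunc b).
Proof.
case: a => [[[a1 a2] a3] u]; case: b => [[[b1 b2] b3] v].
rewrite /trunc /gadd /=; congr pair; apply: functional_extensionality => i.
by case: ifP; rewrite ?addr0.
Qed.

Lemma trunc_scale r a : trunc (gscale r a) = gscale r (trunc a).
Proof.
case: a => [[[a1 a2] a3] u].
rewrite /trunc /gscale /=; congr pair; apply: functional_extensionality => i.
by case: ifP; rewrite ?scaler0.
Qed.

Lemma trunc0 : trunc (gzero K) = gzero K.
Proof.
rewrite /trunc /gzero /=; congr pair; apply: functional_extensionality => i.
by case: ifP.
Qed.

Lemma inG_take (e : gel K) : inG tk e <-> inG n e /\ (forall i, (k < i)%N -> e.2 i = 0).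
Proof.
rewrite /inG size_tk; split.
  move=> H; split; last first.
    move=> i Hi; apply: (proj2 (H i)); apply/negP => /andP[_]; lia.
  move=> i; case: (boolP (1 <= i <= k)%N) => Hik.
    have [H1 _] := H i; have Hd := H1 Hik.
    rewrite dd_take in Hd; last by case/andP: Hik.
    split=> // Hn; exfalso; move/negP: Hn; apply; lia.
  have [_ H2] := H i; rewrite (H2 Hik); split=> _ //; exact: rpred0.
move=> [H Hz] i; split.
  move=> Hik; rewrite dd_take; last by case/andP: Hik.
  apply: (proj1 (H i)); lia.
move=> Hik; case: (boolP (1 <= i <= size n)%N) => Hin.
  apply: Hz; lia.
exact: (proj2 (H i)).
Qed.

Lemma inG_trunc (e : gel K) : inG n e -> inG tk (trunc e).
Proof.
move=> H; apply/inG_take; split; last by move=> i Hi /=; rewrite leqNgt Hi.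
move=> i /=; have [H1 H2] := H i; split.
  by move=> Hi; case: ifP => _; [exact: H1 | exact: rpred0].
by move=> Hi; rewrite (H2 Hi); case: ifP.
Qed.

Lemma inG_trunc_id (e : gel K) : inG tk e -> trunc e = e.
Proof.
case/inG_take=> _ Hz; case: e Hz => s u Hz; rewrite /trunc /=.
congr pair; apply: functional_extensionality => i.
case: (leqP i k) => // Hi; by move: (Hz i Hi) => /= ->.
Qed.

Lemma is_ideal_ext alpha (I I' : gel K -> Prop) m :
  (forall e, I e <-> I' e) -> is_ideal m alpha I' -> is_ideal m alpha I.
Proof.
move=> E [h1 h2 h3 h4 h5]; split.
- by move=> e /E; apply: h1.
- by apply/E.
- by move=> e e' /E ? /E ?; apply/E; apply: h3.
- by move=> r e /E ?; apply/E; apply: h4.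
- by move=> x e ? /E ?; apply/E; apply: h5.
Qed.

Lemma restrict_ideal alpha (J : gel K -> Prop) :
  is_ideal n alpha J -> (forall e, J e -> J (trunc e)) ->
  is_ideal tk alpha (fun e => J e /\ inG tk e).
Proof.
move=> [h1 h2 h3 h4 h5] hT; split.
- by move=> e [].
- split=> //; apply/inG_take; split; first exact: h1.
  by move=> i _.
- move=> e e' [Je Ge] [Je' Ge']; split; first exact: h3.
  apply/inG_take; split; first by apply: h1; apply: h3.
  case/inG_take: Ge => _ z; case/inG_take: Ge' => _ z'.
  move: z z'; case: e {Je} => [[[? ?] ?] u]; case: e' {Je'} => [[[? ?] ?] v].
  move=> z z' i Hi /=; move: (z i Hi) (z' i Hi) => /= -> ->; exact: addr0.
- move=> r e [Je Ge]; split; first exact: h4.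
  apply/inG_take; split; first by apply: h1; apply: h4.
  case/inG_take: Ge => _ z; move: z; case: e {Je} => [[[? ?] ?] u].
  move=> z i Hi /=; move: (z i Hi) => /= ->; exact: scaler0.
- move=> x e Gx [Je Ge].
  have Gxn : inG n x by case/inG_take: Gx.
  rewrite -(inG_trunc_id Gx) -(inG_trunc_id Ge) gbrT.
  split; first by apply: hT; apply: h5.
  by apply: inG_trunc; apply: h1; apply: h5.
Qed.

End Trunc.

Theorem lemma4p8 (K : fieldType) (charK : [pchar K] =i pred0) (n : seq int) :
  sl2_chained K n ->
  forall k : nat, (1 <= k <= size n)%N -> sl2_chained K (take k n).
Proof.
move=> [Hd [alpha [Hok Hnz [Hanti Hjac] Hch]]] k /andP[k1 kn].
have iT := @inG_take K n k k1 kn.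
have tid := @inG_trunc_id K n k k1 kn.
have itr := @inG_trunc K n k k1 kn.
have gT := @gbrT K n k k1 kn.
have sT := @size_tk n k kn.
have dT := @dd_take n k k1 kn.
have Gn : is_ideal n alpha (@inG K n).
  by apply/(Hch (@inG K n)); left.
have [Gsub G0 Gadd Gsc Gbr] := Gn.
split.
  move=> i; rewrite sT => Hi; rewrite dT //; last by case/andP: Hi.
  apply: Hd; case/andP: Hi => ? ?; apply/andP; split=> //; exact: leq_trans kn.
exists alpha; split.
- move=> i j l Hij; rewrite sT => Hl Ha.
  have Hl' : (i + j <= l <= size n)%N.
    by case/andP: Hl => ? ?; apply/andP; split=> //; exact: leq_trans kn.
  have [c [Hc Hs]] := Hok i j l Hij Hl' Ha.
  have Hik : (i <= k)%N by case/andP: Hl => ? ?; case/andP: Hij => ? ?; lia.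
  have Hjk : (j <= k)%N by case/andP: Hl => ? ?; case/andP: Hij => ? ?; lia.
  have Hlk : (l <= k)%N by case/andP: Hl.
  exists c; split.
    by rewrite /cdef !dT //.
  by move=> eij f g; rewrite dT //; apply: Hs.
- move=> j; rewrite sT => Hj; apply: Hnz.
  case/andP: Hj => ? ?; apply/andP; split=> //; exact: leq_trans kn.
- split.
    move=> e Ge.
    rewrite -(tid _ Ge) gT Hanti; first exact: trunc0.
    by case/iT: Ge.
  move=> x y z Gx Gy Gz.
  have gx : inG n x by case/iT: Gx.
  have gy : inG n y by case/iT: Gy.
  have gz : inG n z by case/iT: Gz.
  rewrite -(tid _ Gx) -(tid _ Gy)
    -(tid _ Gz) !gT.
  by rewrite -!trunc_add Hjac ?trunc0.
- move=> I; split.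
  + move=> HI.
    have [i1 i2 i3 i4 i5] := HI.
    pose J e := inG n e /\ I (trunc k e).
    have HJ : is_ideal n alpha J.
      split.
      * by move=> e [].
      * by split=> //; rewrite trunc0.
      * move=> e e' [? ?] [? ?]; split; first exact: Gadd.
        by rewrite trunc_add; apply: i3.
      * move=> r e [? ?]; split; first exact: Gsc.
        by rewrite trunc_scale; apply: i4.
      * move=> x e Gx [Ge Ie]; split; first exact: Gbr.
        rewrite -gT; apply: i5 => //; exact: itr.
    have IJ e : inG (take k n) e -> (I e <-> J e).
      move=> Ge; rewrite /J (tid _ Ge); split; last by case.
      by move=> Ie; split=> //; case/iT: Ge.
    case: (proj1 (Hch J) HJ) => [HA | [k0 [Hk0 HB]]].
      left=> e; split; first exact: i1.
      by move=> Ge; apply/(IJ e Ge)/HA; case/iT: Ge.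
    right; exists (minn k0 k.+1); split.
      rewrite sT; case/andP: Hk0 => ? ?; apply/andP; split; lia.
    move=> e; split.
      move=> Ie; have Ge := i1 e Ie.
      have [_ e1 ez] := proj1 (HB e) (proj1 (IJ e Ge) Ie).
      by split=> // i Hi; apply: ez; lia.
    move=> [Ge e1 ez]; apply/(IJ e Ge)/HB.
    have [gn gz] := proj1 (iT e) Ge.
    split=> // i Hi; case: (leqP i k) => Hik.
      by apply: ez; lia.
    exact: gz.
  + move=> [HA | [k0 [Hk0 HB]]].
      apply: (@is_ideal_ext _ _ _ (fun e => inG n e /\ inG (take k n) e)).
        move=> e; rewrite HA; split; last by case.
        by move=> Ge; split=> //; case/iT: Ge.
      apply: restrict_ideal => //.
      by move=> e Ge; case/iT: (itr _ Ge).
    rewrite sT in Hk0.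
    have Tn : is_ideal n alpha (tail_part n k0).
      apply/(Hch (tail_part n k0)); right; exists k0; split=> //.
      case/andP: Hk0 => ? ?; apply/andP; split=> //; lia.
    apply: (@is_ideal_ext _ _ _ (fun e => tail_part n k0 e /\ inG (take k n) e)).
      move=> e; rewrite HB; split.
        move=> [Ge e1 ez]; split=> //; split=> //.
        by case/iT: Ge.
      by move=> [[_ e1 ez] Ge]; split.
    apply: restrict_ideal => //.
    move=> e [Ge e1 ez]; split.
    * by case/iT: (itr _ Ge).
    * by [].
    * by move=> i Hi /=; case: ifP => // _; apply: ez.
Qed.
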